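(* Let $m,n\ge 0$ and let $A:\Sigma^m\to\Sigma^n$, $B:\Sigma\to\Sigma^n$, $C:\Sigma^m\to\Sigma$ be $\mathsf{R}$-module homomorphisms, and let $d\in\mathsf{R}$ be either $0$ or of positive order, i.e. $d=xf$ for some $f\in\mathsf{R}$. Define $F:\Sigma^m\times\Sigma\to\Sigma^n\times\Sigma$ by $F(\alpha,\sigma)=(A(\alpha)+B(\sigma),\,C(\alpha)+\sigma d)$. Let $I$ be any ideal of $\mathsf{R}$, and suppose $F(\alpha,\sigma)=(\beta,\tau)$ for some $\alpha,\beta,\sigma,\tau$ with $\sigma-\tau\in I$. Then there exist unique $\beta'\in\Sigma^n$ and $\sigma'\in\Sigma$ such that $F(\alpha,\sigma')=(\beta',\sigma')$, and for these one has $\sigma'-\sigma\in I$.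
   Context: $\mathsf{R}=\mathbb{R}[[x]]$ is the ring of formal power series with real coefficients. $\Sigma$ is the set of streams of reals (functions $\mathbb{N}\to\mathbb{R}$), identified with $\mathsf{R}$ via $\sigma\mapsto\sum_i\sigma_i x^i$; $\Sigma^k$ is the $k$-fold cartesian product ($\Sigma^0$ a singleton), an $\mathsf{R}$-module with $\mathsf{R}$ acting componentwise by multiplication. The order of a nonzero $f\in\mathsf{R}$ is the least $i$ with $f_i\neq 0$. *)

(* Defs.v *)
From Stdlib Require Import Reals.
From Stdlib Require Fin.
Open Scope R_scope.

(** Streams of reals, identified with formal power series sum_i s_i x^i. *)
Definition stream := nat -> R.

Definition szero : stream := fun _ => 0.
Definition sadd (s t : stream) : stream := fun i => s i + t i.
Definition sopp (s : stream) : stream := fun i => - s i.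
Definition ssub (s t : stream) : stream := fun i => s i - t i.
(** Cauchy product: (s*t)_n = sum_{i=0}^n s_i t_{n-i}  (sum_f_R0 f n has n+1 terms). *)
Definition smul (s t : stream) : stream :=
  fun n => sum_f_R0 (fun i => s i * t (n - i)%nat) n.
Definition sX : stream := fun i => if Nat.eqb i 1 then 1 else 0.

(** Sigma^k : k-fold cartesian product of streams (Sigma^0 is a singleton). *)
Definition vec (k : nat) := Fin.t k -> stream.

Definition vadd {k} (u v : vec k) : vec k := fun j => sadd (u j) (v j).
Definition vscale {k} (r : stream) (u : vec k) : vec k := fun j => smul r (u j).

Definition is_hom {X Y : Type} (addX : X -> X -> X) (scX : stream -> X -> X)
  (addY : Y -> Y -> Y) (scY : stream -> Y -> Y) (f : X -> Y) : Prop :=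
  (forall u v, f (addX u v) = addY (f u) (f v)) /\
  (forall r u, f (scX r u) = scY r (f u)).

Definition vec_hom (m n : nat) (f : vec m -> vec n) :=
  is_hom vadd vscale vadd vscale f.
Definition vs_hom (n : nat) (f : stream -> vec n) :=
  is_hom sadd smul vadd vscale f.
Definition sv_hom (m : nat) (f : vec m -> stream) :=
  is_hom vadd vscale sadd smul f.

Definition is_ideal (I : stream -> Prop) : Prop :=
  I szero /\
  (forall s t, I s -> I t -> I (sadd s t)) /\
  (forall r s, I s -> I (smul r s)).

Definition Fmap {m n : nat} (A : vec m -> vec n) (B : stream -> vec n)
  (C : vec m -> stream) (d : stream) (alpha : vec m) (sigma : stream)
  : vec n * stream :=
  (vadd (A alpha) (B sigma), sadd (C alpha) (smul sigma d)).

(* Main.v *)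
Require Import Defs.
From Stdlib Require Import Reals Lra Lia.
From mathcomp Require Import all_boot all_algebra.
From mathcomp Require Import Rstruct.
Import GRing.Theory.
Open Scope ring_scope.
Definition T (N : nat) (s : stream) : {poly R} := \poly_(i < N.+1) s i.
Lemma sumR_big f n : sum_f_R0 f n = \sum_(i < n.+1) f i.
Proof. elim: n => [|n IH]; first by rewrite big_ord1.
by rewrite big_ord_recr /= -IH. Qed.
Lemma smul_coef N n s t : (n <= N)%N -> smul s t n = (T N s * T N t)`_n.
Proof. move=> hn; rewrite coefM /smul sumR_big; apply: eq_bigr => i _.
rewrite !coef_poly. have hi := ltn_ord i.
have h1 : (i < N.+1)%N by apply: leq_trans hi _; rewrite ltnS.
have h2 : (n - i < N.+1)%N by rewrite ltnS; apply: leq_trans (leq_subr _ _) hn.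
by rewrite h1 h2. Qed.
Lemma coefT N n s : (n <= N)%N -> (T N s)`_n = s n.
Proof. by move=> h; rewrite coef_poly ltnS h. Qed.
Lemma smul_coefM N n a b (Q : {poly R}) : (n <= N)%N ->
  (T N (smul a b) * Q)`_n = (T N a * T N b * Q)`_n.
Proof. move=> hn; rewrite !coefM; apply: eq_bigr => i _.
have hi : (i <= N)%N by apply: leq_trans hn; rewrite -ltnS.
by rewrite coefT // (smul_coef N i a b hi). Qed.
Lemma smul_comm a b : smul a b = smul b a.
Proof. apply: FunctionalExtensionality.functional_extensionality => n.
by rewrite !(smul_coef _ _ _ _ (leqnn n)) mulrC. Qed.
Lemma smul_assoc a b c : smul (smul a b) c = smul a (smul b c).
Proof. apply: FunctionalExtensionality.functional_extensionality => n.
rewrite (smul_coef _ _ _ _ (leqnn n)) smul_coefM // smul_comm.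
rewrite (smul_coef _ _ _ _ (leqnn n)) smul_coefM // mulrC.
have -> : T n b * T n c * T n a = T n c * (T n a * T n b) by rewrite [T n b * T n c]mulrC -mulrA [T n b * T n a]mulrC.
by []. Qed.
Lemma T_add N a b : T N (sadd a b) = T N a + T N b.
Proof. by apply/polyP => i; rewrite coefD !coef_poly; case: ifP => _; rewrite ?addr0. Qed.
Lemma T_sub N a b : T N (ssub a b) = T N a - T N b.
Proof. by apply/polyP => i; rewrite coefB !coef_poly; case: ifP => _; rewrite ?subr0. Qed.
Lemma smul_addl a b c : smul (sadd a b) c = sadd (smul a c) (smul b c).
Proof. apply: FunctionalExtensionality.functional_extensionality => n.
by rewrite /sadd !(smul_coef _ _ _ _ (leqnn n)) T_add mulrDl coefD. Qed.
Lemma smul_subl a b c : smul (ssub a b) c = ssub (smul a c) (smul b c).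
Proof. apply: FunctionalExtensionality.functional_extensionality => n.
by rewrite /ssub !(smul_coef _ _ _ _ (leqnn n)) T_sub mulrBl coefB. Qed.
Definition sconst (c : R) : stream := fun i => if Nat.eqb i 0 then c else 0.
Lemma T_const N c : T N (sconst c) = c%:P.
Proof. apply/polyP => i; rewrite coefC coef_poly.
by case: i => [|i] //=; case: ifP. Qed.
Lemma smul_const c s : smul (sconst c) s = fun n => c * s n.
Proof. apply: FunctionalExtensionality.functional_extensionality => n.
by rewrite (smul_coef _ _ _ _ (leqnn n)) T_const coefCM coefT. Qed.
Local Close Scope ring_scope.
Open Scope R_scope.
Lemma smul_constR c s : smul (sconst c) s = fun n => Rmult c (s n).
Proof. exact: smul_const. Qed.

Lemma agree (a b d : stream) (k : nat) : d 0%nat = 0 ->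
  (forall i, (i < k)%coq_nat -> a i = b i) ->
  forall i, (i <= k)%coq_nat -> smul a d i = smul b d i.
Proof.
intros hd H i hi. unfold smul. apply Stdlib.Reals.PartSum.sum_eq. intros j hj.
destruct (Compare_dec.lt_dec j k) as [l|l].
- rewrite (H j l). reflexivity.
- assert (j = i) by lia. subst j. rewrite Nat.sub_diag hd. ring.
Qed.

Fixpoint it (c d : stream) (k : nat) : stream :=
  match k with O => c | S k => sadd c (smul (it c d k) d) end.

Lemma it_stab c d : d 0%nat = 0 -> forall k i, (i < k)%coq_nat -> it c d (S k) i = it c d k i.
Proof.
intros hd k. induction k as [|k IH]; intros i hi; [lia|].
change (c i + smul (it c d (S k)) d i = c i + smul (it c d k) d i).
f_equal. apply (agree _ _ _ k hd); [exact IH| lia].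
Qed.

Lemma it_stab2 c d : d 0%nat = 0 -> forall k i, (i < k)%coq_nat -> it c d k i = it c d (S i) i.
Proof.
intros hd k. induction k as [|k IH]; intros i hi; [lia|].
destruct (Compare_dec.lt_dec i k) as [l|l].
- rewrite (it_stab c d hd k i l). apply IH, l.
- assert (i = k) by lia. subst. reflexivity.
Qed.

Definition sol (c d : stream) : stream := fun n => it c d (S n) n.

Lemma sol_fix c d : d 0%nat = 0 -> sol c d = sadd c (smul (sol c d) d).
Proof.
intros hd. apply FunctionalExtensionality.functional_extensionality. intros n.
unfold sol at 1. change (c n + smul (it c d n) d n = sadd c (smul (sol c d) d) n).
unfold sadd. f_equal. apply (agree _ _ _ n hd); [|lia].
intros i hi. unfold sol. exact: (it_stab2 c d hd n i hi).
Qed.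

Lemma fix_uniq c d a b : d 0%nat = 0 -> a = sadd c (smul a d) -> b = sadd c (smul b d) -> a = b.
Proof.
intros hd Ha Hb.
assert (K : forall k i, (i < k)%coq_nat -> a i = b i).
{ intros k. induction k as [|k IH]; intros i hi; [lia|].
  destruct (Compare_dec.lt_dec i k) as [l|l]; [apply IH, l|].
  assert (i = k) by lia. subst i.
  rewrite Ha Hb. unfold sadd. f_equal. apply (agree _ _ _ k hd IH). lia. }
apply FunctionalExtensionality.functional_extensionality. intros n. apply (K (S n)). lia.
Qed.

Theorem lemma5p2 (m n : nat)
  (A : vec m -> vec n) (B : stream -> vec n) (C : vec m -> stream) (d : stream)
  (hA : vec_hom m n A) (hB : vs_hom n B) (hC : sv_hom m C)
  (hd : exists f : stream, d = smul sX f)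
  (I : stream -> Prop) (hI : is_ideal I)
  (alpha : vec m) (beta : vec n) (sigma tau : stream)
  (hF : Fmap A B C d alpha sigma = (beta, tau))
  (hst : I (ssub sigma tau)) :
  (exists! p : vec n * stream, Fmap A B C d alpha (snd p) = (fst p, snd p)) /\
  (forall p : vec n * stream,
     Fmap A B C d alpha (snd p) = (fst p, snd p) -> I (ssub (snd p) sigma)).
Proof.
assert (hd0 : d 0%nat = 0).
{ destruct hd as [f ->]. unfold smul, sX. simpl. ring. }
unfold Fmap in hF. injection hF. intros Htau Hbeta.
pose proof (sol_fix (C alpha) d hd0) as Hs.
split.
- exists (vadd (A alpha) (B (sol (C alpha) d)), sol (C alpha) d). split.
  + unfold Fmap. simpl. rewrite -Hs. reflexivity.
  + intros [b s] H. unfold Fmap in H. simpl in H. injection H. intros H2 H1.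
    assert (E : sol (C alpha) d = s) by (apply (fix_uniq (C alpha) d _ _ hd0 Hs); symmetry; exact H2).
    subst s. rewrite H1. reflexivity.
- intros [b s] H. unfold Fmap in H. simpl in H. injection H. intros H2 H1. simpl.
  set (u := ssub tau sigma).
  assert (Hu : I u).
  { replace u with (smul (sconst (-1)) (ssub sigma tau)).
    - destruct hI as [_ [_ hm]]. apply hm, hst.
    - rewrite smul_constR. apply FunctionalExtensionality.functional_extensionality.
      intros k. unfold u, ssub. ring. }
  pose proof (sol_fix (sconst 1) d hd0) as Hh. set (h := sol (sconst 1) d) in *.
  assert (Hv : smul h u = sadd u (smul (smul h u) d)).
  { rewrite {1}Hh smul_addl smul_constR smul_assoc (smul_comm d u) -smul_assoc.
    f_equal. apply FunctionalExtensionality.functional_extensionality. intros k. ring. }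
  assert (He : ssub s sigma = sadd u (smul (ssub s sigma) d)).
  { rewrite smul_subl. apply FunctionalExtensionality.functional_extensionality. intros k.
    pose proof (f_equal (fun g => g k) H2) as E2. pose proof (f_equal (fun g => g k) Htau) as E3.
    unfold u, ssub, sadd in *. simpl in *. lra. }
  rewrite (fix_uniq u d _ _ hd0 He Hv).
  destruct hI as [_ [_ hm]]. apply hm, Hu.
Qed.
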